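(* Let $n \ge 2$, $L\ge 1$, let $\Lambda^l\subseteq[n]$ for $l\in[L]$, put $\Lambda:=\bigcup_{l\in[L]}\Lambda^l$, and let $\mathcal{A}_k^l$ be the Snuffy sparsity patterns $$\mathcal{A}_k^l = \{k\} \cup \begin{cases} [n] & \text{if } k \in \Lambda^l,\\ \Lambda^l & \text{otherwise.}\end{cases}$$ Suppose $|\Lambda| \ge \frac{n-1}{2}$. Then: (1) $k\in\mathcal{A}_k^l$ for all $k\in[n]$, $l\in[L]$; (2) there is a permutation $\gamma$ of $[n]$ such that for all $i\in[n-1]$, $\gamma(i)\in\bigcup_{l=1}^{L}\mathcal{A}^l_{\gamma(i+1)}$; (3) the directed graph on $[n]$ with an arc $k\to j$ whenever $j\in\mathcal{A}_k^l$ for some $l\in[L]$ is strongly connected (every patch attends to every other patch, directly or indirectly), and in fact any two vertices are joined by a directed path of length at most $2$.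
   Context: $[a]=\{1,\dots,a\}$. The set $\mathcal{A}_k^l$ is the set of patches that patch $k$ attends to in layer $l$ of a sparse transformer. Conditions (1)–(3) are the sufficient conditions (from prior work) for a sparse transformer with a softmax-type probability map to be a universal approximator of sequence-to-sequence functions. *)

(* Defs.v *)
From mathcomp Require Import all_boot all_fingroup.
Set Implicit Arguments. Unset Strict Implicit. Unset Printing Implicit Defensive.

(* Patches [n] = {1..n} are represented by 'I_n = {0..n-1}; layers [L] by 'I_L.
   Lam l : {set 'I_n} is Lambda^l. *)

Definition LamU (n L : nat) (Lam : 'I_L -> {set 'I_n}) : {set 'I_n} :=
  \bigcup_(l < L) Lam l.

Definition snuffyA (n L : nat) (Lam : 'I_L -> {set 'I_n}) (l : 'I_L) (k : 'I_n)
  : {set 'I_n} :=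
  k |: (if k \in Lam l then [set: 'I_n] else Lam l).

Definition snuffy_arc (n L : nat) (Lam : 'I_L -> {set 'I_n}) : rel 'I_n :=
  fun k j => [exists l : 'I_L, j \in snuffyA Lam l k].

(* Main.v *)
Require Import Defs.
From mathcomp Require Import all_boot all_fingroup.
From mathcomp Require Import zify.

Section Aux.
Variable T : eqType.

Fixpoint ilv (t s : seq T) : seq T :=
  match t with
  | [::] => s
  | x :: t' => x :: match s with [::] => t' | y :: s' => y :: ilv t' s' end
  end.

Lemma ilv_perm t s : perm_eq (ilv t s) (t ++ s).
Proof.
elim: t s => [|x t IH] [|y s] //=; rewrite ?cats0 // perm_cons.
rewrite perm_sym -(cat1s y s) perm_catCA /= perm_cons perm_sym; exact: IH.
Qed.

Variable P : pred T.
Definition rP : rel T := fun x y => P x || P y.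

Lemma sorted_allP s : all P s -> sorted rP s.
Proof.
elim: s => [|x s IH] //= /andP[Px Ps].
case: s IH Ps => [|y s] //= IH /andP[Py Ps].
by rewrite /rP Px /=; have := IH; rewrite /= Py Ps => ->.
Qed.

Lemma ilv_sorted t s : all (predC P) t -> all P s -> size t <= (size s).+1 ->
  sorted rP (ilv t s).
Proof.
elim: t s => [|x t IH] s /=; first by move=> _ Hs _; exact: sorted_allP.
move=> /andP[_ Ht]; case: s => [|y s] /=.
  by case: t {IH Ht}.
move=> /andP[Py Hs] Hsz.
rewrite {1}/rP Py orbT /=.
have := IH s Ht Hs Hsz.
case: (ilv t s) => [|z w] //= ->; by rewrite /rP Py andbT.
Qed.
End Aux.
Arguments ilv {T}. Arguments ilv_perm {T}. Arguments rP {T}. Arguments ilv_sorted {T P}. Arguments sorted_allP {T P}.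

Lemma arc_lem (n L : nat) (Lam : 'I_L -> {set 'I_n}) (x y : 'I_n) :
  (x \in LamU Lam) || (y \in LamU Lam) -> x \in \bigcup_(l < L) snuffyA Lam l y.
Proof.
case/orP => /bigcupP[l _ Hl]; apply/bigcupP; exists l => //;
rewrite /snuffyA !inE.
  by case: ifP => _; rewrite ?inE ?Hl orbT.
by rewrite Hl inE orbT.
Qed.


Lemma arc_lem2 (n L : nat) (Lam : 'I_L -> {set 'I_n}) (x y : 'I_n) :
  (x \in LamU Lam) || (y \in LamU Lam) -> snuffy_arc Lam x y.
Proof.
rewrite orbC => /(@arc_lem n L Lam y x) /bigcupP[l _ H].
by apply/existsP; exists l.
Qed.

Theorem mainTheorem2 (n L : nat) (Lam : 'I_L -> {set 'I_n}) :
  2 <= n -> 1 <= L ->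
  n - 1 <= 2 * #|LamU Lam| ->
  (* (1) *)
  (forall (k : 'I_n) (l : 'I_L), k \in snuffyA Lam l k) /\
  (* (2) *)
  (exists g : {perm 'I_n}, forall i j : 'I_n, nat_of_ord j = i.+1 ->
      g i \in \bigcup_(l < L) snuffyA Lam l (g j)) /\
  (* (3) strongly connected, with paths of length at most 2 *)
  (forall k j : 'I_n, connect (snuffy_arc Lam) k j) /\
  (forall k j : 'I_n,
      (k == j) || snuffy_arc Lam k j ||
      [exists m : 'I_n, snuffy_arc Lam k m && snuffy_arc Lam m j]).
Proof.
move=> Hn _ Hcard.
have [m Hm] : exists m, m \in LamU Lam.
  have : 0 < #|LamU Lam| by lia.
  by case/card_gt0P => m; exists m.
have H3 : forall k j : 'I_n, [exists m0 : 'I_n, snuffy_arc Lam k m0 && snuffy_arc Lam m0 j].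
  move=> k j; apply/existsP; exists m.
  by rewrite !arc_lem2 // ?Hm ?orbT.
split; first by move=> k l; rewrite /snuffyA !inE eqxx.
split; last split; last by move=> k j; rewrite H3 !orbT.
  - set A := LamU Lam.
    set u := ilv (enum (~: A)) (enum A).
    have Hperm := ilv_perm (enum (~: A)) (enum A).
    have Hsz : size u = n.
      by rewrite (perm_size Hperm) size_cat -!cardE addnC cardsC card_ord.
    have Huniq : uniq u.
      rewrite (perm_uniq Hperm) cat_uniq !enum_uniq /= andbT.
      apply/hasPn => x; rewrite !mem_enum inE => ->; by [].
    have Hsort : sorted (rP (mem A)) u.
      apply: ilv_sorted.
      - by apply/allP => x; rewrite mem_enum !inE.
      - by apply/allP => x; rewrite mem_enum.
      - rewrite -!cardE.
        have := cardsC A; rewrite card_ord; move: Hcard; rewrite -/A; lia.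
    pose x0 := m.
    have Hin : forall i : 'I_n, i < size u by move=> i; rewrite Hsz.
    have ginj : injective (fun i : 'I_n => nth x0 u i).
      by move=> i j /eqP; rewrite nth_uniq // => /eqP /val_inj.
    exists (perm ginj) => i j Hj; rewrite !permE.
    apply: arc_lem.
    move/sortedP: Hsort => /(_ x0 i); rewrite Hsz -Hj => /(_ (ltn_ord j)).
    by rewrite /rP /= orbC.
  - move=> k j; apply: (@connect_trans _ _ m); apply: connect1; rewrite arc_lem2 // Hm ?orbT //.
Qed.
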